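(* Let $(g_d)_{d\ge1}$ be a sequence of integer-valued functions on the positive integers such that $g_1(n)=0$ for all $n\ge1$ and $g_d(n)=g_d(\operatorname{rad}(n))$ for all $n\ge1$ and all $d\mid n$. Then the integer sequence $a_n=\sum_{d\mid n} d\,\mu(d)\,g_d(n)$ is an Euler–Gauss sequence. In particular, for an arbitrary sequence $(f_p)$, indexed by primes $p$, of integer-valued functions on the positive integers, the sequence $a_n=\sum_{p\mid n,\ p\text{ prime}} p\, f_p(\operatorname{rad}(n))$ is an Euler–Gauss sequence.
   Context: $\mu$ is the Möbius function and $\operatorname{rad}(n)=\prod_{p\mid n,\,p\text{ prime}}p$ (with $\operatorname{rad}(1)=1$). For an integer sequence $(a_n)$ and $n\ge1$, $A_n^+=\prod_{d\mid n,\ \mu(d)=1} a_{n/d}$ and $A_n^-=\prod_{d\mid n,\ \mu(d)=-1} a_{n/d}$ (empty products equal $1$). An Euler–Gauss sequence is an integer sequence with $A_n^+\equiv A_n^-\pmod n$ for all $n\ge1$. *)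

(* Defs.v *)
From mathcomp Require Import all_boot all_order all_algebra.
Set Implicit Arguments. Unset Strict Implicit. Unset Printing Implicit Defensive.
Import GRing.Theory Num.Theory.
Local Open Scope ring_scope.

Definition squarefreeb (n : nat) : bool :=
  all (fun p => logn p n == 1%N) (primes n).

Definition moebius (n : nat) : int :=
  if n == 0%N then 0
  else if squarefreeb n then (-1) ^+ size (primes n) else 0.

Definition radical (n : nat) : nat := (\prod_(p <- primes n) p)%N.

Definition Aplus (a : nat -> int) (n : nat) : int :=
  \prod_(d <- divisors n | moebius d == 1) a (n %/ d)%N.
Definition Aminus (a : nat -> int) (n : nat) : int :=
  \prod_(d <- divisors n | moebius d == -1) a (n %/ d)%N.

Definition euler_gauss (a : nat -> int) : Prop :=
  forall n : nat, (0 < n)%N -> (Aplus a n = Aminus a n %[mod n%:Z])%Z.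

(* Main.v *)
Require Import Defs.
From mathcomp Require Import all_boot all_order all_algebra.
Import GRing.Theory Num.Theory.
Local Open Scope ring_scope.

Lemma mu_mulp p d : prime p -> (0 < d)%N -> ~~ (p %| d)%N ->
  moebius (p * d)%N = - moebius d.
Proof.
move=> pp d0 npd.
have p0 : (0 < p)%N by exact: prime_gt0.
have npr : p \notin primes d by rewrite mem_primes pp d0 npd.
have Hperm : perm_eq (primes (p * d)%N) (p :: primes d).
  apply: uniq_perm; first exact: primes_uniq.
    by rewrite /= npr primes_uniq.
  by move=> q; rewrite primesM // primes_prime // !in_cons in_nil orbF.
have Hsq : squarefreeb (p * d)%N = squarefreeb d.
  rewrite /squarefreeb (perm_all _ Hperm) /= lognM // logn_prime // eqxx.
  have -> : logn p d = 0%N by apply/eqP; rewrite -leqn0 leqNgt logn_gt0.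
  rewrite /=; apply: eq_in_all => q qd.
  rewrite lognM // logn_prime //.
  have -> : (q == p) = false by apply/negP => /eqP qp; move: npr; rewrite -qp qd.
  by [].
rewrite /moebius Hsq (perm_size Hperm) /=.
have -> : ((p * d)%N == 0%N) = false by apply/negbTE; rewrite -lt0n muln_gt0 p0 d0.
have -> : (d == 0%N) = false by apply/negbTE; rewrite -lt0n d0.
by case: (squarefreeb d); rewrite ?exprS ?mulN1r ?oppr0.
Qed.



Lemma mu_sq p d : prime p -> (p ^ 2 %| d)%N -> moebius d = 0.
Proof.
move=> pp hd; rewrite /moebius; case: eqP => // /eqP; rewrite -lt0n => d0.
have pd : p \in primes d.
  by rewrite mem_primes pp d0 (dvdn_trans _ hd) // dvdn_exp.
have hl : (2 <= logn p d)%N by rewrite -pfactor_dvdn.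
suff -> : squarefreeb d = false by [].
apply/negP => /allP /(_ p pd) /eqP hh; by rewrite hh in hl.
Qed.

Lemma mu_ne0_pos d : moebius d != 0 -> (0 < d)%N.
Proof. by rewrite /moebius; case: d. Qed.

Lemma primes_prod (s : seq nat) : all prime s ->
  primes (\prod_(p <- s) p)%N =i s.
Proof.
elim: s => [|p s IH] /=; first by rewrite big_nil.
case/andP => pp ps q.
have h0 : (0 < \prod_(p <- s) p)%N.
  rewrite big_seq prodn_cond_gt0 // => i; move: ps => /allP H /H.
  exact: prime_gt0.
by rewrite big_cons (primesM _ (prime_gt0 pp) h0) primes_prime // IH // !in_cons in_nil orbF.
Qed.

Lemma radical_pos n : (0 < radical n)%N.
Proof.
rewrite /radical big_seq prodn_cond_gt0 // => i.
by rewrite mem_primes => /andP[/prime_gt0].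
Qed.

Lemma primes_radical n : primes (radical n) = primes n.
Proof.
apply/eq_primes => q; rewrite primes_prod //.
by apply/allP => p; rewrite mem_primes => /andP[].
Qed.

Lemma radical_radical n : radical (radical n) = radical n.
Proof. by rewrite {1}/radical primes_radical. Qed.

Lemma radical_mulp p N : prime p -> (0 < N)%N -> (p %| N)%N ->
  radical (p * N) = radical N.
Proof.
move=> pp N0 pN; rewrite /radical; congr (\prod_(_ <- _) _)%N.
apply/eq_primes => q; rewrite (primesM _ (prime_gt0 pp) N0) primes_prime // in_cons in_nil orbF.
case: eqP => // ->; by rewrite mem_primes pp N0 pN.
Qed.


Definition aseq (g : nat -> nat -> int) (n : nat) : int :=
  \sum_(d <- divisors n) (d%:Z * moebius d * g d n).

Lemma sq_of_not_dvd p N e : prime p -> (p %| N)%N -> (e %| p * N)%N ->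
  ~~ (e %| N)%N -> (p ^ 2 %| e)%N.
Proof.
move=> pp pN epN neN.
have p0 := prime_gt0 pp.
case pe: (p %| e)%N; last first.
  have cop : coprime e p by rewrite coprime_sym prime_coprime // pe.
  by move: epN; rewrite Gauss_dvdr // (negbTE neN).
case/dvdnP: pe => e' ee'; subst e.
move: epN; rewrite [(p * N)%N]mulnC dvdn_pmul2r // => e'N.
case pe': (p %| e')%N.
  by rewrite (expnS p 1) expn1 dvdn_mul.
have cop : coprime e' p by rewrite coprime_sym prime_coprime // pe'.
by move: neN; rewrite Gauss_dvd // e'N pN.
Qed.

Lemma a_step g p N :
  (forall n d : nat, (0 < n)%N -> (d %| n)%N -> g d n = g d (radical n)) ->
  prime p -> (0 < N)%N -> (p %| N)%N -> aseq g (p * N) = aseq g N.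
Proof.
move=> Hrad pp N0 pN.
have p0 := prime_gt0 pp.
have pN0 : (0 < p * N)%N by rewrite muln_gt0 p0 N0.
rewrite /aseq (bigID (fun e => e %| N)%N) /=.
rewrite [X in _ + X]big1_seq ?addr0; last first.
  move=> e /andP[neN]; rewrite -dvdn_divisors // => epN.
  by rewrite (@mu_sq p e pp (sq_of_not_dvd _ _ _ pp pN epN neN)) mulr0 mul0r.
rewrite -big_filter.
have Hperm : perm_eq [seq e <- divisors (p * N) | (e %| N)%N] (divisors N).
  apply: uniq_perm; rewrite ?filter_uniq ?divisors_uniq // => e.
  rewrite mem_filter -!dvdn_divisors //.
  case eN: (e %| N)%N => //=; exact: dvdn_mull.
rewrite (perm_big _ Hperm) /=; apply: eq_big_seq => e; rewrite -dvdn_divisors // => eN.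
rewrite (Hrad (p * N)%N) ?dvdn_mull // radical_mulp // -Hrad //.
Qed.

Lemma F_eq g p n e :
  (forall n d : nat, (0 < n)%N -> (d %| n)%N -> g d n = g d (radical n)) ->
  prime p -> (0 < n)%N -> (p ^ 2 %| n)%N -> ~~ (p %| e)%N -> (0 < e)%N ->
  (p * e %| n)%N -> aseq g (n %/ (p * e)) = aseq g (n %/ e).
Proof.
move=> Hrad pp n0 p2n npe e0 pen.
have p0 := prime_gt0 pp.
set k := (n %/ (p * e))%N.
have nk : n = (k * (p * e))%N by rewrite divnK.
have k0 : (0 < k)%N by move: n0; rewrite nk muln_gt0 => /andP[].
have -> : (n %/ e = p * k)%N by rewrite nk mulnA mulnK // mulnC.
rewrite a_step //.
move: p2n; rewrite nk (expnS p 1) expn1 mulnCA dvdn_pmul2l // => h.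
have : (p %| k * e)%N by [].
by rewrite Euclid_dvdM // (negbTE npe) orbF.
Qed.

Definition sig p d := if (p %| d)%N then (d %/ p)%N else (p * d)%N.

Lemma sig_prop g p n d :
  (forall n d : nat, (0 < n)%N -> (d %| n)%N -> g d n = g d (radical n)) ->
  prime p -> (0 < n)%N -> (p ^ 2 %| n)%N -> (d %| n)%N -> moebius d != 0 ->
  [/\ (sig p d %| n)%N, moebius (sig p d) = - moebius d, sig p (sig p d) = d
    & aseq g (n %/ sig p d) = aseq g (n %/ d)].
Proof.
move=> Hrad pp n0 p2n dn mu0.
have p0 := prime_gt0 pp.
have pn : (p %| n)%N by apply: dvdn_trans p2n; rewrite dvdn_exp.
have d0 := @mu_ne0_pos d mu0.
rewrite /sig; case pd: (p %| d)%N; last first.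
  have cop : coprime p d by rewrite prime_coprime // pd.
  have pdn : (p * d %| n)%N by rewrite Gauss_dvd // pn dn.
  rewrite pdn mu_mulp ?pd // dvdn_mulr // mulKn //; split => //.
  by rewrite F_eq ?pd.
case/dvdnP: pd => d' dd'; subst d.
have d'0 : (0 < d')%N by move: d0; rewrite muln_gt0 => /andP[].
have npd' : ~~ (p %| d')%N.
  apply/negP => pd'; move: mu0; rewrite (@mu_sq p) ?eqxx //.
  by rewrite (expnS p 1) expn1 dvdn_mul.
rewrite mulnK // (negbTE npd') mulnC mu_mulp // opprK; split => //.
- by apply: dvdn_trans dn; apply: dvdn_mulr.
- symmetry; apply: F_eq => //; by rewrite mulnC.
Qed.

Lemma nonsq g p n :
  (forall n d : nat, (0 < n)%N -> (d %| n)%N -> g d n = g d (radical n)) ->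
  prime p -> (0 < n)%N -> (p ^ 2 %| n)%N -> Aplus (aseq g) n = Aminus (aseq g) n.
Proof.
move=> Hrad pp n0 p2n.
rewrite /Aplus /Aminus -(big_filter (divisors n)) -(big_filter (divisors n)).
set L1 := [seq d <- divisors n | moebius d == 1].
set L2 := [seq d <- divisors n | moebius d == -1].
have HL2 : forall d, d \in L2 -> (d %| n)%N /\ moebius d = -1.
  by move=> d; rewrite mem_filter -dvdn_divisors // => /andP[/eqP].
have Hperm : perm_eq L1 (map (sig p) L2).
  apply: uniq_perm; first by rewrite filter_uniq ?divisors_uniq.
    rewrite map_inj_in_uniq ?filter_uniq ?divisors_uniq //.
    apply: (@can_in_inj _ _ _ _ (sig p)) => d /HL2 [dn md].
    by case: (sig_prop g p n _ Hrad pp n0 p2n dn); rewrite ?md.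
  move=> x; rewrite mem_filter -dvdn_divisors //.
  apply/idP/idP.
    case/andP => /eqP mx xn.
    have [H1 H2 H3 _] := sig_prop g p n _ Hrad pp n0 p2n xn (ltac:(by rewrite mx)).
    apply/mapP; exists (sig p x) => //.
    by rewrite mem_filter -dvdn_divisors // H1 H2 mx eqxx.
  case/mapP => y /HL2 [yn my] ->.
  have [H1 H2 H3 _] := sig_prop g p n _ Hrad pp n0 p2n yn (ltac:(by rewrite my)).
  by rewrite H1 H2 my opprK eqxx.
rewrite (perm_big _ Hperm) big_map; apply: eq_big_seq => d /HL2 [dn md].
have [H1 H2 H3 H4] := sig_prop g p n _ Hrad pp n0 p2n dn (ltac:(by rewrite md)).
by rewrite H4.
Qed.

Lemma a_one g : g 1%N 1%N = 0 -> aseq g 1 = 0.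
Proof.
move=> h; rewrite /aseq (_ : divisors 1 = [:: 1%N]) //.
by rewrite big_seq1 h mulr0.
Qed.

Lemma a_prime g q : prime q -> g 1%N q = 0 -> (q%:Z %| aseq g q)%Z.
Proof.
move=> pq h; rewrite /aseq big_seq; apply: rpred_sum => d.
rewrite -dvdn_divisors ?prime_gt0 //.
case/primeP: pq => _ H /H /orP [] /eqP ->.
  by rewrite h mulr0 dvdz0.
by apply: dvdz_mulr; apply: dvdz_mulr; apply: dvdzz.
Qed.

Lemma side_zero g n c : g 1%N 1%N = 0 -> (0 < n)%N -> moebius n = c ->
  \prod_(d <- divisors n | moebius d == c) aseq g (n %/ d) = 0.
Proof.
move=> h n0 mc.
rewrite big_mkcond (bigD1_seq n) ?divisors_id ?divisors_uniq //=.
by rewrite mc eqxx divnn n0 a_one // mul0r.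
Qed.

Lemma side_div g n c : (forall q, (0 < q)%N -> g 1%N q = 0) -> (0 < n)%N ->
  (forall q, q \in primes n -> logn q n = 1%N) ->
  (forall q, q \in primes n -> moebius (n %/ q) = c) ->
  (n%:Z %| \prod_(d <- divisors n | moebius d == c) aseq g (n %/ d))%Z.
Proof.
move=> h n0 hl hc.
set X := \prod_(d <- divisors n | moebius d == c) aseq g (n %/ d).
rewrite dvdzE /=.
have [->|X0] := posnP `|X|%N; first exact: dvdn0.
apply/(dvdn_partP _ n0) => q qn.
rewrite p_part hl // expn1.
have pq : prime q by move: qn; rewrite mem_primes => /andP[].
have qdn : (q %| n)%N by move: qn; rewrite mem_primes => /and3P[].
have q0 := prime_gt0 pq.
have nq0 : (0 < n %/ q)%N by rewrite divn_gt0 // dvdn_leq.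
suff : (q%:Z %| X)%Z by rewrite dvdzE.
rewrite /X big_mkcond (bigD1_seq (n %/ q)%N) ?divisors_uniq //=; last first.
  by rewrite -dvdn_divisors // dvdn_div.
rewrite hc // eqxx; apply: dvdz_mulr.
have -> : (n %/ (n %/ q))%N = q.
  by rewrite -{1}(divnK qdn) mulKn.
by apply: a_prime => //; apply: h.
Qed.

Lemma part1 g :
  (forall n : nat, (0 < n)%N -> g 1%N n = 0) ->
  (forall n d : nat, (0 < n)%N -> (d %| n)%N -> g d n = g d (radical n)) ->
  euler_gauss (fun n => \sum_(d <- divisors n) (d%:Z * moebius d * g d n)).
Proof.
move=> H1 Hrad; change (euler_gauss (aseq g)) => n n0.
case: (boolP (has (fun p => p ^ 2 %| n)%N (primes n))) => [/hasP [p pn p2n] | nh].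
  have pp : prime p by move: pn; rewrite mem_primes => /andP[].
  by rewrite (nonsq g p n Hrad).
have hl : forall q, q \in primes n -> logn q n = 1%N.
  move=> q qn; have pq : prime q by move: qn; rewrite mem_primes => /andP[].
  apply/eqP; rewrite eqn_leq [(1 <= _)%N]logn_gt0 qn andbT.
  rewrite leqNgt; apply/negP => h2.
  by move/hasPn: nh => /(_ q qn); rewrite pfactor_dvdn // h2.
have hmu : forall q, q \in primes n -> moebius (n %/ q)%N = - moebius n.
  move=> q qn; have pq : prime q by move: qn; rewrite mem_primes => /andP[].
  have qdn : (q %| n)%N by move: qn; rewrite mem_primes => /and3P[].
  have nq0 : (0 < n %/ q)%N by rewrite divn_gt0 ?prime_gt0 // dvdn_leq.
  have nqq : (q * (n %/ q))%N = n by rewrite mulnC divnK.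
  have nd : ~~ (q %| n %/ q)%N.
    apply/negP => h; move/hasPn: nh => /(_ q qn); rewrite -nqq.
    by rewrite (expnS q 1) expn1 dvdn_pmul2l ?prime_gt0 // h.
  by rewrite -{2}nqq mu_mulp // opprK.
have sq : squarefreeb n by apply/allP => q /hl ->.
have [mn|mn] : moebius n = 1 \/ moebius n = -1.
  rewrite /moebius (negbTE (_ : n != 0%N)) ?sq -?lt0n // -signr_odd.
  by case: odd; [right|left].
- rewrite /Aplus (@side_zero g n _ (H1 1%N isT) n0 mn).
  apply/eqP; rewrite eqz_mod_dvd sub0r rpredN.
  apply: side_div => // q qn; by rewrite hmu // mn.
- rewrite /Aminus (@side_zero g n _ (H1 1%N isT) n0 mn).
  apply/eqP; rewrite eqz_mod_dvd subr0.
  apply: side_div => // q qn; by rewrite hmu // mn opprK.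
Qed.

Lemma eg_ext a b : (forall n, a n = b n) -> euler_gauss a -> euler_gauss b.
Proof.
move=> E H n n0.
have -> : Aplus b n = Aplus a n by apply: eq_bigr => d _; rewrite E.
have -> : Aminus b n = Aminus a n by apply: eq_bigr => d _; rewrite E.
exact: H.
Qed.

Lemma mu_prime p : prime p -> moebius p = -1.
Proof.
move=> pp; have := @mu_mulp p 1%N pp isT.
rewrite muln1 => ->; first by [].
by rewrite dvdn1; apply/eqP => h; rewrite h in pp.
Qed.

Lemma part2 f :
  euler_gauss (fun n => \sum_(p <- primes n) (p%:Z * f p (radical n))).
Proof.
pose g := fun d n => if prime d then - f d (radical n) else 0.
apply: (@eg_ext (fun n => \sum_(d <- divisors n) (d%:Z * moebius d * g d n))).
  move=> n; rewrite (bigID (fun d => prime d)) /= [X in _ + X]big1 ?addr0; last first.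
    by move=> d /negbTE nd; rewrite /g nd mulr0.
  case: (posnP n) => [->|n0]; first by rewrite (_ : divisors 0 = [:: 1%N]) // big_cons /= !big_nil.
  rewrite -big_filter.
  have Hperm : perm_eq [seq d <- divisors n | prime d] (primes n).
    apply: uniq_perm; rewrite ?filter_uniq ?divisors_uniq ?primes_uniq // => q.
    by rewrite mem_filter mem_primes -dvdn_divisors // n0 andbC.
  rewrite (perm_big _ Hperm) /=; apply: eq_big_seq => p.
  rewrite mem_primes => /andP[pp _].
  by rewrite /g pp mu_prime // mulrN1 mulrNN.
apply: part1; first by move=> n _; rewrite /g.
by move=> n d _ _; rewrite /g radical_radical.
Qed.

Theorem corollary1 :
  (forall g : nat -> nat -> int,
      (forall n : nat, (0 < n)%N -> g 1%N n = 0) ->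
      (forall n d : nat, (0 < n)%N -> (d %| n)%N -> g d n = g d (radical n)) ->
      euler_gauss (fun n => \sum_(d <- divisors n) (d%:Z * moebius d * g d n)))
  /\
  (forall f : nat -> nat -> int,
      euler_gauss (fun n => \sum_(p <- primes n) (p%:Z * f p (radical n)))).
Proof. split; [exact: part1 | exact: part2]. Qed.
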